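(* Let $p\ge1$ and let $\kappa_{m+1/2}$, $m\in\mathbb Z$, be real, $p$-periodic in $m$. Consider a $p$-member ensemble on $N$ patches (cyclic patch index, spacing $H$), each patch with $n\ge1$ interior points (with $n$ arbitrary, not necessarily a multiple of $p$), with field values $u^I_{i,\ell}(t)$, $i=1,\dots,n$, $\ell=0,\dots,p-1$, evolving by $$d^2\partial_t u^I_{i,\ell}=\kappa_{i+\ell+\frac12}(u^I_{i+1,\ell}-u^I_{i,\ell})+\kappa_{i+\ell-\frac12}(u^I_{i-1,\ell}-u^I_{i,\ell}),$$ (subscripts of $\kappa$ modulo $p$). Let real scalar coefficients $\mathcal I^{IJ}_{n1},\mathcal I^{IJ}_{1n}$ satisfy $\mathcal I^{IJ}_{1n}=\mathcal I^{JI}_{n1}$ for all $I,J$ (as for the spectral or Lagrangian interpolation coefficients). Couple the patches across ensemble members by $$u^I_{0,m}=\sum_J\mathcal I^{IJ}_{1n}\,u^J_{n,(m-n)\bmod p},\qquad u^I_{n+1,m}=\sum_J\mathcal I^{IJ}_{n1}\,u^J_{1,(m+n)\bmod p},\qquad m=0,\dots,p-1,$$ so that each edge value is interpolated from a member whose corresponding next-to-edge diffusivity is the same. Then the resulting linear system $\partial_t\mathbf u=\mathcal L\mathbf u$ on all interior values $\mathbf u\in\mathbb R^{nNp}$ has a real symmetric (self-adjoint) matrix $\mathcal L$.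
   Context: Member $\ell$ of the ensemble is the heterogeneous lattice diffusion with diffusivities phase-shifted by $\ell$: in member $\ell$, the diffusivity between lattice points $i$ and $i+1$ is $\kappa_{i+\ell+1/2}$; thus the left-edge diffusivity of member $m$ is $\kappa_{m+1/2}$ and the right-edge diffusivity of member $m$ is $\kappa_{n+m+1/2}$. *)

(* Defs.v *)
From mathcomp Require Import all_boot all_order all_algebra.
Set Implicit Arguments. Unset Strict Implicit. Unset Printing Implicit Defensive.
Import Order.TTheory GRing.Theory Num.Theory.
Local Open Scope ring_scope.

(* Index of an interior value u^I_{i,l}: patch I : 'I_N, interior point
   i : 'I_n (0-based: i stands for the paper's point i+1 in 1..n),
   ensemble member l : 'I_p. *)
Definition idx (N n p : nat) : finType := ('I_N * 'I_n * 'I_p)%type.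

Section Ensemble.
Variables (R : realFieldType) (N n p : nat).
Variable (kap : int -> R).            (* kap m = kappa_{m+1/2} *)
Variables (In1 I1n : 'I_N -> 'I_N -> R).
Variable (d : R).

(* value u^I_{k,l} of an interior point with 0-based nat indices k < n, l < p
   (0 outside range, never used there) *)
Definition uval (u : idx N n p -> R) (I : 'I_N) (k l : nat) : R :=
  match (insub k : option 'I_n), (insub l : option 'I_p) with
  | Some k', Some l' => u (I, k', l')
  | _, _ => 0
  end.

(* extended field u^I_{k,l}, k = 0..n+1 (1-based, the paper's indexing);
   edge values k = 0, n+1 given by the cross-member coupling *)
Definition ext (u : idx N n p -> R) (I : 'I_N) (k : nat) (l : 'I_p) : R :=
  if k == 0%N then
    \sum_(J < N) I1n I J * uval u J n.-1 `|((l%:Z - n%:Z) %% p%:Z)%Z|%N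
  else if k == n.+1 then
    \sum_(J < N) In1 I J * uval u J 0 `|((l%:Z + n%:Z) %% p%:Z)%Z|%N
  else uval u I k.-1 l.

Definition rhs (u : idx N n p -> R) (a : idx N n p) : R :=
  let: (P, i, l) := a in
  let k := (val i).+1 in
  (d ^+ 2)^-1 *
    (kap (k%:Z + (val l)%:Z) * (ext u P k.+1 l - ext u P k l)
     + kap (k%:Z + (val l)%:Z - 1) * (ext u P k.-1 l - ext u P k l)).

End Ensemble.

(* Main.v *)
Require Import Defs.
From mathcomp Require Import all_boot all_order all_algebra.
From mathcomp Require Import zify ring lra.
Import Order.TTheory GRing.Theory Num.Theory.
Local Open Scope ring_scope.


Lemma absmod (p : nat) (x : int) : (0 < p)%N -> (`|(x %% p%:Z)%Z|%N)%:Z = (x %% p%:Z)%Z.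
Proof. move=> hp. rewrite abszE ger0_norm // modz_ge0 //. by rewrite eqz_nat -lt0n. Qed.

Lemma modeq (p n l m : nat) : (0 < p)%N -> (l < p)%N -> (m < p)%N ->
  (`|((l%:Z - n%:Z) %% p%:Z)%Z|%N == m) = (`|((m%:Z + n%:Z) %% p%:Z)%Z|%N == l).
Proof.
move=> hp hl hm.
rewrite -!eqz_nat !absmod //.
have E : forall (x : int) (k : nat), (k < p)%N ->
    ((x %% p%:Z)%Z == k%:Z) = (p%:Z %| x - k%:Z)%Z.
  move=> x k hk; rewrite -eqz_mod_dvd.
  by rewrite [(k%:Z %% _)%Z]modz_small //; apply/andP; split; lia.
rewrite E // E // !dvdzE.
have -> : (m%:Z + n%:Z - l%:Z) = - (l%:Z - n%:Z - m%:Z) by ring.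
by rewrite abszN.
Qed.

Lemma kap_per (R : Type) (p : nat) (kap : int -> R)
  (hkap : forall m : int, kap (m + p%:Z) = kap m) (q y : int) :
  kap (y + q * p%:Z) = kap y.
Proof.
have hpos : forall k : nat, forall y, kap (y + k%:Z * p%:Z) = kap y.
  elim=> [|k IH] y0; first by rewrite mul0r addr0.
  have -> : (k.+1)%:Z = k%:Z + 1 by lia.
  by rewrite mulrDl mul1r addrA hkap IH.
case: q => k; first exact: hpos.
rewrite -(hpos k.+1 (y + Negz k * p%:Z)) -addrA -mulrDl.
by rewrite NegzE addNr mul0r addr0.
Qed.

Lemma kap_mod (R : Type) (p : nat) (kap : int -> R)
  (hkap : forall m : int, kap (m + p%:Z) = kap m) (y : int) :
  kap (y %% p%:Z)%Z = kap y.
Proof. by rewrite {2}(divz_eq y p%:Z) addrC kap_per. Qed.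

Section Aux.
Variables (R : realFieldType) (N n p : nat).

Definition delta (b x : idx N n p) : R := (x == b)%:R.

Lemma sum_delta (T : finType) (u : T -> R) (x : T) :
  \sum_b u b * (x == b)%:R = u x.
Proof.
rewrite (bigD1 x) //= eqxx mulr1 big1 ?addr0 // => b /negPf.
by rewrite eq_sym => ->; rewrite mulr0.
Qed.

Lemma uval_lin (u : idx N n p -> R) J k l :
  uval u J k l = \sum_b u b * uval (delta b) J k l.
Proof.
rewrite /uval. case: (insub k : option 'I_n) => [k'|]; case: (insub l : option 'I_p) => [l'|];
  rewrite ?sum_delta //; by rewrite big1 // => b _; rewrite mulr0.
Qed.

Lemma uval_delta (Q : 'I_N) (j : 'I_n) (m : 'I_p) J k l :
  uval (delta (Q, j, m)) J k l = ((J == Q) && (k == j) && (l == m))%:R.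
Proof.
rewrite /uval /delta. case: (insubP 'I_n k) => [k' _ ek|hk]; case: (insubP 'I_p l) => [l' _ el|hl] //=.
- by rewrite -ek -el !xpair_eqE.
- case: (l =P m) => [e|]; last by rewrite andbF.
  by move: hl; rewrite e ltn_ord.
- case: (k =P j) => [e|]; last by rewrite andbF andFb.
  by move: hk; rewrite e ltn_ord.
- case: (k =P j) => [e|]; last by rewrite andbF andFb.
  by move: hk; rewrite e ltn_ord.
Qed.

Variables (In1 I1n : 'I_N -> 'I_N -> R).

Lemma ext_lin (u : idx N n p -> R) P k l :
  ext In1 I1n u P k l = \sum_b u b * ext In1 I1n (delta b) P k l.
Proof.
rewrite /ext. case: ifP => _.
  under eq_bigr do rewrite uval_lin mulr_sumr.
  rewrite exchange_big /=; apply: eq_bigr => b _; rewrite mulr_sumr.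
  by apply: eq_bigr => J _; rewrite mulrCA.
case: ifP => _; last exact: uval_lin.
under eq_bigr do rewrite uval_lin mulr_sumr.
rewrite exchange_big /=; apply: eq_bigr => b _; rewrite mulr_sumr.
by apply: eq_bigr => J _; rewrite mulrCA.
Qed.

Lemma rhs_lin (kap : int -> R) d (u : idx N n p -> R) a :
  rhs kap In1 I1n d u a = \sum_b u b * rhs kap In1 I1n d (delta b) a.
Proof.
case: a => [[P i] l] /=.
rewrite !(ext_lin u) -!sumrB !mulr_sumr -big_split mulr_sumr /=.
by apply: eq_bigr => b _; rewrite mulrCA; congr (_ * _); ring.
Qed.

Hypothesis hn : (0 < n)%N.

Lemma ext_delta (Q : 'I_N) (j : 'I_n) (m : 'I_p) P k (l : 'I_p) :
  ext In1 I1n (delta (Q, j, m)) P k l =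
   (k == 0)%N%:R * I1n P Q * ((n.-1 == val j) && (`|((l%:Z - n%:Z) %% p%:Z)%Z|%N == val m))%N%:R
 + (k == n.+1)%N%:R * In1 P Q * ((0 == val j) && (`|((l%:Z + n%:Z) %% p%:Z)%Z|%N == val m))%N%:R
 + ((P == Q) && (k == (val j).+1)%N && (l == m))%:R.
Proof.
rewrite /ext. case: (k =P 0) => [->|hk0] /=.
  rewrite mul1r mul0r mul0r addr0 andbF andFb addr0.
  under eq_bigr do rewrite uval_delta.
  rewrite (bigD1 Q) //= eqxx /= big1 ?addr0 // => J /negPf ->; by rewrite mulr0.
rewrite mul0r mul0r add0r; case: (k =P n.+1) => [->|hk1] /=.
  rewrite mul1r. have -> : (n.+1 == j.+1) = false.
    by apply/negbTE; rewrite eqSS neq_ltn ltn_ord orbT.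
  rewrite andbF andFb addr0.
  under eq_bigr do rewrite uval_delta.
  rewrite (bigD1 Q) //= eqxx /= big1 ?addr0 // => J /negPf ->; by rewrite mulr0.
rewrite mul0r mul0r add0r uval_delta; case: k hk0 hk1 => //= k _ _.
Qed.

Variables (kap : int -> R) (d : R).

Definition Lc (a b : idx N n p) : R :=
  let: (P, i, l) := a in let: (Q, j, m) := b in
  ((P == Q) && (l == m))%:R *
    (kap ((val i).+1%:Z + (val l)%:Z) * (((val i).+1 == j)%:R - (val i == j)%:R)
     + kap ((val i).+1%:Z + (val l)%:Z - 1) * ((val i == (val j).+1)%:R - (val i == j)%:R))
  + In1 P Q * (((val i).+1 == n) && (val j == 0%N)
       && (`|((l%:Z + n%:Z) %% p%:Z)%Z|%N == m))%:R * kap ((val i).+1%:Z + (val l)%:Z)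
  + I1n P Q * ((val i == 0%N) && (val j == n.-1)
       && (`|((l%:Z - n%:Z) %% p%:Z)%Z|%N == m))%:R * kap ((val i).+1%:Z + (val l)%:Z - 1).

Lemma rhs_delta a b : rhs kap In1 I1n d (delta b) a = (d ^+ 2)^-1 * Lc a b.
Proof.
case: a => [[P i] l]; case: b => [[Q j] m] /=.
rewrite !ext_delta /= !eqSS.
have -> : (val i == n) = false by apply/negbTE; rewrite neq_ltn ltn_ord.
have -> : (val i == n.+1) = false by apply/negbTE; rewrite neq_ltn ltnS (ltnW (ltn_ord i)).
congr (_ * _).
rewrite [(0 == _)%N]eq_sym [(n.-1 == _)%N]eq_sym.
rewrite -!mulnb !natrM.
rewrite ?mulr0n; ring.
Qed.
Hypothesis hp : (0 < p)%N.
Hypothesis hkap : forall m : int, kap (m + p%:Z) = kap m.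
Hypothesis hI : forall I J, I1n I J = In1 J I.

Lemma int_sym (i j l : nat) :
  kap (i.+1%:Z + l%:Z) * ((i.+1 == j)%:R - (i == j)%:R)
    + kap (i.+1%:Z + l%:Z - 1) * ((i == j.+1)%:R - (i == j)%:R) =
  kap (j.+1%:Z + l%:Z) * ((j.+1 == i)%:R - (j == i)%:R)
    + kap (j.+1%:Z + l%:Z - 1) * ((j == i.+1)%:R - (j == i)%:R).
Proof.
case: (ltngtP i j) => h; last by rewrite h.
- have -> : (i == j.+1) = false by apply/eqP; lia.
  have -> : (j.+1 == i) = false by apply/eqP; lia.
  rewrite ?mulr0n ?subr0 ?mulr0 ?addr0 ?add0r.
  rewrite [(j == i.+1)]eq_sym; case: eqP => [<-|_]; last by rewrite !mulr0n !mulr0.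
  congr (kap _ * _); lia.
- have -> : (j == i.+1) = false by apply/eqP; lia.
  have -> : (i.+1 == j) = false by apply/eqP; lia.
  rewrite ?mulr0n ?subr0 ?mulr0 ?addr0 ?add0r.
  rewrite [(i == j.+1)]eq_sym; case: eqP => [<-|_]; last by rewrite !mulr0n !mulr0.
  congr (kap _ * _); lia.
Qed.

Lemma edge_sym (P Q : 'I_N) (i j : 'I_n) (l m : 'I_p) :
  I1n P Q * ((val i == 0%N) && (val j == n.-1)
       && (`|((l%:Z - n%:Z) %% p%:Z)%Z|%N == m))%:R * kap ((val i).+1%:Z + (val l)%:Z - 1)
  = In1 Q P * (((val j).+1 == n) && (val i == 0%N)
       && (`|((m%:Z + n%:Z) %% p%:Z)%Z|%N == l))%:R * kap ((val j).+1%:Z + (val m)%:Z).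
Proof.
rewrite hI modeq // ?ltn_ord //.
have -> : ((val j).+1 == n) = (val j == n.-1) by apply/eqP/eqP; lia.
case: (val i =P 0%N) => [hi|_]; last by rewrite ?andbF ?andFb /= !mulr0n ?mulr0 ?mul0r.
case: (val j =P n.-1) => [hj|_]; last by rewrite ?andbF ?andFb /= !mulr0n ?mulr0 ?mul0r.
case: eqP => [hm|_]; last by rewrite ?andbF ?andFb /= !mulr0n ?mulr0 ?mul0r.
rewrite /=; congr (_ * _).
rewrite hi.
have -> : (0%N.+1%:Z + (val l)%:Z - 1) = ((m%:Z + n%:Z) %% p%:Z)%Z.
  by rewrite -absmod // hm [1%Z + _]addrC addrK.
rewrite (kap_mod _ _ _ hkap); congr kap; move: hj => /= hj; lia.
Qed.

Lemma Lc_sym a b : Lc a b = Lc b a.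
Proof.
case: a => [[P i] l]; case: b => [[Q j] m] /=.
rewrite [Q == P]eq_sym [m == l]eq_sym.
have -> : ((P == Q) && (l == m))%:R *
    (kap ((val i).+1%:Z + (val l)%:Z) * (((val i).+1 == j)%:R - (val i == j)%:R)
     + kap ((val i).+1%:Z + (val l)%:Z - 1) * ((val i == (val j).+1)%:R - (val i == j)%:R))
  = ((P == Q) && (l == m))%:R *
    (kap ((val j).+1%:Z + (val m)%:Z) * (((val j).+1 == i)%:R - (val j == i)%:R)
     + kap ((val j).+1%:Z + (val m)%:Z - 1) * ((val j == (val i).+1)%:R - (val j == i)%:R)).
  case: (P == Q); case: (l =P m) => [->|] /=; rewrite ?mul0r //.
  by rewrite int_sym.
rewrite edge_sym (edge_sym Q P j i m l); ring.
Qed.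

End Aux.

Theorem mainTheorem3 (R : realFieldType) (p n N : nat)
  (hp : (0 < p)%N) (hn : (0 < n)%N)
  (kap : int -> R) (hkap : forall m : int, kap (m + p%:Z) = kap m)
  (In1 I1n : 'I_N -> 'I_N -> R) (hI : forall I J, I1n I J = In1 J I)
  (d : R) (hd : d != 0) :
  exists L : idx N n p -> idx N n p -> R,
    (forall (u : idx N n p -> R) (a : idx N n p),
        rhs kap In1 I1n d u a = \sum_(b : idx N n p) L a b * u b)
    /\ (forall a b : idx N n p, L a b = L b a).
Proof.
exists (fun a b => rhs kap In1 I1n d (delta R N n p b) a); split.
  move=> u a; rewrite rhs_lin; apply: eq_bigr => b _; exact: mulrC.
move=> a b; rewrite !rhs_delta.
by rewrite (Lc_sym _ _ _ _ _ _ hn _ hp hkap hI).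
Qed.
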